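(* Let $G$ be a 2-connected graph and $G'$ a graph that is not a circuit, and let $f:G\rightarrow G'$ be a circuit surjection. Let $e$ be an edge of $G'$. If $C$ is a circuit of $G$ containing at least one element of $f^{-1}(e)$, then $C$ contains every element of $f^{-1}(e)$.
   Context: Graphs are undirected, without loops or multiple edges, and not necessarily finite. A circuit surjection $f:G\rightarrow G'$ is a map from the edge set $E(G)$ onto the edge set $E(G')$ such that for every circuit (cycle) $C$ of $G$, the edge set $f(C)$ is a circuit of $G'$; it is also required that $G'$ has no isolated vertices. ''$G'$ is not a circuit'' means $G'$ is not itself a single cycle. *)

(* Defs.v *)
From Stdlib Require Import Arith Lia.

Record graph := {
  V : Type;
  E : Type;
  ends : E -> V -> Prop;
  ends_two : forall e, exists u v, u <> v /\ forall w, ends e w <-> (w = u \/ w = v);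
  no_multi : forall e1 e2, (forall w, ends e1 w <-> ends e2 w) -> e1 = e2
}.

Arguments ends {g} _ _.

Definition adj (G : graph) (u v : V G) : Prop :=
  u <> v /\ exists e : E G, ends e u /\ ends e v.

Definition is_circuit (G : graph) (C : E G -> Prop) : Prop :=
  exists (n : nat) (v : nat -> V G) (e : nat -> E G),
    3 <= n /\
    (forall i j, i < n -> j < n -> v i = v j -> i = j) /\
    (forall i, i < n -> ends (e i) (v i) /\ ends (e i) (v ((i + 1) mod n))) /\
    (forall x, C x <-> exists i, i < n /\ e i = x).

Definition joined_avoiding (G : graph) (X : V G -> Prop) (u v : V G) : Prop :=
  exists (n : nat) (w : nat -> V G),
    w 0 = u /\ w n = v /\
    (forall i, i <= n -> ~ X (w i)) /\
    (forall i, i < n -> adj G (w i) (w (i + 1))).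

Definition connected_minus (G : graph) (X : V G -> Prop) : Prop :=
  forall u v, ~ X u -> ~ X v -> joined_avoiding G X u v.

(* 2-connected (Diestel): more than 2 vertices and G - X connected
   for every set X of fewer than 2 vertices. *)
Definition two_connected (G : graph) : Prop :=
  (exists a b c : V G, a <> b /\ a <> c /\ b <> c) /\
  connected_minus G (fun _ => False) /\
  (forall x : V G, connected_minus G (fun y => y = x)).

Definition image {A B : Type} (f : A -> B) (C : A -> Prop) : B -> Prop :=
  fun y => exists x, C x /\ f x = y.

Definition circuit_surjection (G G' : graph) (f : E G -> E G') : Prop :=
  (forall y : E G', exists x, f x = y) /\
  (forall C, is_circuit G C -> is_circuit G' (image f C)) /\
  (forall v : V G', exists e : E G', ends e v).

Definition graph_is_circuit (G : graph) : Prop :=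
  is_circuit G (fun _ => True).

(* Main.v *)
Require Import Defs.
From Stdlib Require Import Arith Lia List Classical ClassicalEpsilon Setoid.
Import ListNotations.

Section Basic.
Variable G : graph.

Lemma ends_char (s : E G) a b : a <> b -> ends s a -> ends s b ->
  forall w, ends s w <-> (w = a \/ w = b).
Proof.
  intros Hab Ha Hb w.
  destruct (ends_two G s) as (p & q & Hpq & Hs).
  rewrite Hs in Ha, Hb |- *.
  destruct Ha as [-> | ->]; destruct Hb as [-> | ->]; try congruence; intuition.
Qed.

Lemma edge_uniq (s t : E G) a b : a <> b -> ends s a -> ends s b -> ends t a -> ends t b -> s = t.
Proof.
  intros Hab H1 H2 H3 H4. apply no_multi. intro w.
  rewrite (ends_char s a b Hab H1 H2), (ends_char t a b Hab H3 H4). tauto.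
Qed.

Definition nxt (n i : nat) := if Nat.eqb (i+1) n then 0 else i+1.

Lemma mod_nxt n i : i < n -> (i+1) mod n = nxt n i.
Proof.
  intros H. unfold nxt. destruct (Nat.eqb_spec (i+1) n).
  - subst. apply Nat.Div0.mod_same.
  - apply Nat.mod_small. lia.
Qed.

Lemma circ_data (C : E G -> Prop) : is_circuit G C ->
  exists n (v : nat -> V G) (e : nat -> E G),
    3 <= n /\ (forall i j, i < n -> j < n -> v i = v j -> i = j) /\
    (forall i, i < n -> forall w, ends (e i) w <-> (w = v i \/ w = v (nxt n i))) /\
    (forall x, C x <-> exists i, i < n /\ e i = x).
Proof.
  intros (n & v & e & Hn & Hinj & He & HC).
  exists n, v, e. split; [auto|]. split; [auto|]. split; [|auto].
  intros i0 Hi. destruct (He i0 Hi) as [H1 H2]. rewrite mod_nxt in H2 by lia.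
  apply ends_char; auto.
  intro Heq. apply Hinj in Heq; unfold nxt in *; [| lia |].
  - destruct (Nat.eqb_spec (i0+1) n); lia.
  - unfold nxt; destruct (Nat.eqb_spec (i0+1) n); lia.
Qed.

Lemma circ_loc (C : E G -> Prop) : is_circuit G C -> forall w,
  (exists s, C s /\ ends s w) ->
  exists s1 s2, s1 <> s2 /\ C s1 /\ C s2 /\ ends s1 w /\ ends s2 w /\
    forall t, C t -> ends t w -> t = s1 \/ t = s2.
Proof.
  intros HCc w (s & Hs & Hsw).
  destruct (circ_data C HCc) as (n & v & e & Hn & Hinj & He & HC).
  assert (Hk : exists k, k < n /\ w = v k).
  { apply HC in Hs. destruct Hs as (i & Hi & <-).
    apply (He i Hi) in Hsw. destruct Hsw as [-> | ->].
    - exists i; auto.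
    - exists (nxt n i). split; auto. unfold nxt; destruct (Nat.eqb_spec (i+1) n); lia. }
  destruct Hk as (k & Hk & ->).
  set (pk := if Nat.eqb k 0 then n - 1 else k - 1).
  assert (Hpk : pk < n) by (unfold pk; destruct (Nat.eqb_spec k 0); lia).
  assert (Hnp : nxt n pk = k) by (unfold nxt; destruct (Nat.eqb_spec (pk+1) n); unfold pk in *; destruct (Nat.eqb_spec k 0); lia).
  exists (e k), (e pk). repeat split.
  - intro Heq. assert (Hx : ends (e pk) (v (nxt n k))) by (rewrite <- Heq; apply He; auto).
    apply (He pk Hpk) in Hx. rewrite Hnp in Hx.
    assert (nxt n k < n) by (unfold nxt; destruct (Nat.eqb_spec (k+1) n); lia).
    destruct Hx as [Hx|Hx]; apply Hinj in Hx; auto; unfold nxt, pk in *;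
      destruct (Nat.eqb_spec k 0); destruct (Nat.eqb_spec (k+1) n); lia.
  - apply HC. eauto.
  - apply HC. eauto.
  - apply He; auto.
  - apply He; auto; rewrite Hnp; auto.
  - intros t Ht Htw. apply HC in Ht. destruct Ht as (j & Hj & <-).
    apply (He j Hj) in Htw.
    assert (nxt n j < n) by (unfold nxt; destruct (Nat.eqb_spec (j+1) n); lia).
    destruct Htw as [Htw|Htw]; apply Hinj in Htw; try assumption.
    + left; f_equal; lia.
    + right. f_equal. unfold nxt, pk in *.
      destruct (Nat.eqb_spec k 0); destruct (Nat.eqb_spec (j+1) n); lia.
Qed.

Lemma circ_two (C : E G -> Prop) : is_circuit G C -> forall w s d t,
  C s -> C d -> s <> d -> ends s w -> ends d w -> C t -> ends t w -> t = s \/ t = d.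
Proof.
  intros HC w s d t Hs Hd Hsd Hsw Hdw Ht Htw.
  destruct (circ_loc C HC w (ex_intro _ s (conj Hs Hsw))) as (s1 & s2 & H12 & _ & _ & _ & _ & Hall).
  pose proof (Hall s Hs Hsw). pose proof (Hall d Hd Hdw). pose proof (Hall t Ht Htw).
  intuition congruence.
Qed.

Lemma circ_nonempty (C : E G -> Prop) : is_circuit G C -> exists s, C s.
Proof.
  intros (n & v & e & Hn & _ & _ & HC). exists (e 0). apply HC. exists 0. split; auto; lia.
Qed.

Lemma circ_closure (C X : E G -> Prop) : is_circuit G C ->
  (exists s, X s /\ C s) ->
  (forall w s t, X s -> C s -> ends s w -> C t -> ends t w -> X t) ->
  forall t, C t -> X t.
Proof.
  intros HCc (s & Xs & Cs) Hcl.
  destruct (circ_data C HCc) as (n & v & e & Hn & Hinj & He & HC).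
  assert (Hstep : forall j, j < n -> X (e j) -> X (e (nxt n j))).
  { intros j Hj Xj. apply (Hcl (v (nxt n j)) (e j)); auto.
    - apply HC; eauto.
    - apply He; auto.
    - apply HC. exists (nxt n j). split; auto. unfold nxt; destruct (Nat.eqb_spec (j+1) n); lia.
    - apply He. unfold nxt; destruct (Nat.eqb_spec (j+1) n); lia. auto. }
  apply HC in Cs. destruct Cs as (i & Hi & <-).
  assert (Hup : forall m, i + m < n -> X (e (i + m))).
  { induction m; intros Hm. rewrite Nat.add_0_r; auto.
    specialize (Hstep (i + m) ltac:(lia) (IHm ltac:(lia))).
    unfold nxt in Hstep. destruct (Nat.eqb_spec (i+m+1) n); [lia|].
    replace (i + S m) with (i + m + 1) by lia. auto. }
  assert (H0 : X (e 0)).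
  { specialize (Hup (n - 1 - i) ltac:(lia)). specialize (Hstep (i + (n-1-i)) ltac:(lia) Hup).
    unfold nxt in Hstep. destruct (Nat.eqb_spec (i + (n-1-i) + 1) n); [auto|lia]. }
  assert (Hlow : forall m, m < n -> X (e m)).
  { induction m; intros Hm; auto.
    specialize (Hstep m ltac:(lia) (IHm ltac:(lia))).
    unfold nxt in Hstep. destruct (Nat.eqb_spec (m+1) n); [lia|].
    replace (S m) with (m + 1) by lia. auto. }
  intros t Ct. apply HC in Ct. destruct Ct as (j & Hj & <-). auto.
Qed.

Lemma circ_sub (C D : E G -> Prop) : is_circuit G C -> is_circuit G D ->
  (forall s, D s -> C s) -> forall s, C s -> D s.
Proof.
  intros HC HD Hsub. apply circ_closure; auto.
  - destruct (circ_nonempty D HD) as [s Hs]. eauto.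
  - intros w s t Ds Cs Hsw Ct Htw.
    destruct (circ_loc D HD w (ex_intro _ s (conj Ds Hsw))) as (s1 & s2 & H12 & D1 & D2 & E1 & E2 & _).
    destruct (circ_two C HC w s1 s2 t (Hsub _ D1) (Hsub _ D2) H12 E1 E2 Ct Htw) as [-> | ->]; auto.
Qed.

Definition symd (A B : E G -> Prop) s := (A s /\ ~ B s) \/ (B s /\ ~ A s).

Lemma symd_closed (Z W1 W2 : E G -> Prop) : is_circuit G Z -> is_circuit G W1 -> is_circuit G W2 ->
  (forall s, symd Z W1 s -> W2 s) ->
  forall w s t, Z s -> ~ W1 s -> ends s w -> W2 t -> ends t w -> symd Z W1 t.
Proof.
  intros HZ HW1 HW2 Hsub w s t Zs W1s Hsw W2t Htw.
  destruct (circ_loc Z HZ w (ex_intro _ s (conj Zs Hsw))) as (s1 & s2 & H12 & Z1 & Z2 & E1 & E2 & Hall).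
  assert (Hb : exists b, b <> s /\ Z b /\ ends b w).
  { destruct (Hall s Zs Hsw) as [-> | ->]; eauto. }
  destruct Hb as (b & Hbs & Zb & Hbw).
  destruct (classic (W1 b)) as [W1b | W1b].
  - destruct (circ_loc W1 HW1 w (ex_intro _ b (conj W1b Hbw))) as (d1 & d2 & Hd12 & Wd1 & Wd2 & F1 & F2 & Hall2).
    assert (Hd : exists d, d <> b /\ W1 d /\ ends d w).
    { destruct (Hall2 b W1b Hbw) as [-> | ->]; eauto. }
    destruct Hd as (d & Hdb & W1d & Hdw).
    assert (Hds : d <> s) by (intro; subst; tauto).
    assert (Zd : ~ Z d).
    { intro Zd. destruct (circ_two Z HZ w s b d Zs Zb (not_eq_sym Hbs) Hsw Hbw Zd Hdw); congruence. }
    assert (Xs : symd Z W1 s) by (left; auto).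
    assert (Xd : symd Z W1 d) by (right; auto).
    destruct (circ_two W2 HW2 w s d t (Hsub _ Xs) (Hsub _ Xd) (not_eq_sym Hds) Hsw Hdw W2t Htw) as [-> | ->]; auto.
  - assert (Xs : symd Z W1 s) by (left; auto).
    assert (Xb : symd Z W1 b) by (left; auto).
    destruct (circ_two W2 HW2 w s b t (Hsub _ Xs) (Hsub _ Xb) (not_eq_sym Hbs) Hsw Hbw W2t Htw) as [-> | ->]; auto.
Qed.

Lemma circ_symd (Z W1 W2 : E G -> Prop) : is_circuit G Z -> is_circuit G W1 -> is_circuit G W2 ->
  (exists a, Z a /\ ~ W1 a) ->
  (forall s, symd Z W1 s -> W2 s) ->
  forall s, W2 s -> symd Z W1 s.
Proof.
  intros HZ HW1 HW2 (a & Za & W1a) Hsub.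
  apply circ_closure; auto.
  - exists a. split; [left; auto | apply Hsub; left; auto].
  - intros w s t [[Zs W1s] | [W1s Zs]] W2s Hsw W2t Htw.
    + eapply symd_closed; eauto.
    + assert (Hsub' : forall s, symd W1 Z s -> W2 s) by (intros; apply Hsub; unfold symd in *; tauto).
      pose proof (symd_closed W1 Z W2 HW1 HZ HW2 Hsub' w s t W1s Zs Hsw W2t Htw).
      unfold symd in *; tauto.
Qed.

End Basic.

Section Theta.
Variable G : graph.

Definition seteq (A B : E G -> Prop) := forall s, A s <-> B s.
Definition thU (Z W1 W2 : E G -> Prop) :=
  (forall s, Z s -> W1 s \/ W2 s) /\ (forall s, W1 s -> Z s \/ W2 s) /\ (forall s, W2 s -> Z s \/ W1 s).

Lemma th_eq Z W1 W2 : is_circuit G Z -> is_circuit G W1 -> is_circuit G W2 ->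
  thU Z W1 W2 -> seteq Z W1 -> seteq Z W2.
Proof.
  intros HZ HW1 HW2 (H1 & H2 & H3) Heq.
  assert (Hs : forall s, W2 s -> Z s) by (intros s Hs; destruct (H3 s Hs); auto; apply Heq; auto).
  pose proof (circ_sub G Z W2 HZ HW2 Hs). intro s; split; auto.
Qed.

Lemma th_neq Z W1 W2 : is_circuit G Z -> is_circuit G W1 -> is_circuit G W2 ->
  thU Z W1 W2 -> ~ seteq Z W1 -> seteq W2 (symd G Z W1).
Proof.
  intros HZ HW1 HW2 (H1 & H2 & H3) Hne.
  assert (Ha : exists a, Z a /\ ~ W1 a).
  { apply NNPP. intro Hn. apply Hne.
    assert (Hs : forall s, Z s -> W1 s).
    { intros s Zs. apply NNPP. intro. apply Hn. eauto. }
    pose proof (circ_sub G W1 Z HW1 HZ Hs). intro s; split; auto. }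
  assert (Hsub : forall s, symd G Z W1 s -> W2 s).
  { intros s [[A B]|[A B]].
    - destruct (H1 s A); tauto.
    - destruct (H2 s A); tauto. }
  pose proof (circ_symd G Z W1 W2 HZ HW1 HW2 Ha Hsub).
  intro s; split; auto.
Qed.

Lemma th_all Z W1 W2 e : is_circuit G Z -> is_circuit G W1 -> is_circuit G W2 ->
  thU Z W1 W2 -> Z e -> W1 e -> W2 e -> seteq Z W1 /\ seteq Z W2.
Proof.
  intros HZ HW1 HW2 Ht Ze W1e W2e.
  destruct (classic (seteq Z W1)) as [Heq | Hne].
  - split; auto. apply (th_eq Z W1 W2); auto.
  - exfalso. pose proof (th_neq Z W1 W2 HZ HW1 HW2 Ht Hne) as Hs.
    apply Hs in W2e. unfold symd in W2e. tauto.
Qed.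

Lemma th_tri Z O1 O2 O3 K1 K2 K3 :
  is_circuit G O1 -> is_circuit G O2 -> is_circuit G O3 ->
  is_circuit G K1 -> is_circuit G K2 -> is_circuit G K3 ->
  seteq O1 Z -> seteq O2 Z -> seteq O3 Z ->
  thU O1 K1 K2 -> thU O2 K1 K3 -> thU O3 K2 K3 ->
  seteq K1 Z /\ seteq K2 Z /\ seteq K3 Z.
Proof.
  intros HO1 HO2 HO3 HK1 HK2 HK3 E1 E2 E3 T1 T2 T3.
  destruct (classic (seteq O1 K1)) as [Heq | Hne].
  - pose proof (th_eq _ _ _ HO1 HK1 HK2 T1 Heq) as F2.
    assert (Heq2 : seteq O2 K1) by (intro s; specialize (Heq s); specialize (E1 s); specialize (E2 s); tauto).
    pose proof (th_eq _ _ _ HO2 HK1 HK3 T2 Heq2) as F3.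
    split; [|split]; intro s; specialize (Heq s); specialize (E1 s); specialize (E2 s);
      specialize (F2 s); specialize (F3 s); tauto.
  - exfalso.
    pose proof (th_neq _ _ _ HO1 HK1 HK2 T1 Hne) as F2.
    assert (Hne2 : ~ seteq O2 K1) by (intro H; apply Hne; intro s; specialize (H s); specialize (E1 s); specialize (E2 s); tauto).
    pose proof (th_neq _ _ _ HO2 HK1 HK3 T2 Hne2) as F3.
    assert (F23 : seteq K2 K3).
    { intro s; specialize (F2 s); specialize (F3 s); specialize (E1 s); specialize (E2 s); unfold symd in *; tauto. }
    destruct T3 as (T31 & _ & _).
    assert (Hs : forall s, O3 s -> K2 s) by (intros s Hs; destruct (T31 s Hs); auto; apply F23; auto).
    pose proof (circ_sub G K2 O3 HK2 HO3 Hs) as Hb.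
    destruct (circ_nonempty G K1 HK1) as [s Hs1].
    destruct (classic (O1 s)) as [Os | Os].
    + assert (K2 s) by (apply Hs; apply E3, E1; auto).
      apply F2 in H. unfold symd in H; tauto.
    + assert (K2 s) by (apply F2; right; auto).
      apply Os, E1, E3, Hb; auto.
Qed.

End Theta.

Section Lists.
Variable G : graph.

Fixpoint walk (l : list (V G)) : Prop :=
  match l with
  | a :: ((b :: _) as t) => adj G a b /\ walk t
  | _ => True
  end.

Fixpoint PE (l : list (V G)) (s : E G) : Prop :=
  match l with
  | a :: ((b :: _) as t) => (ends s a /\ ends s b) \/ PE t s
  | _ => False
  end.

Lemma adj_sym a b : adj G a b -> adj G b a.
Proof. intros [H (s & H1 & H2)]. split; eauto. Qed.

Lemma walk_app l1 x l2 : walk (l1 ++ x :: l2) <-> walk (l1 ++ [x]) /\ walk (x :: l2).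
Proof.
  induction l1 as [|a l1 IH]; simpl; [tauto|].
  destruct l1 as [|b l1]; simpl in *; [tauto|]. rewrite IH. tauto.
Qed.

Lemma PE_app l1 x l2 s : PE (l1 ++ x :: l2) s <-> PE (l1 ++ [x]) s \/ PE (x :: l2) s.
Proof.
  induction l1 as [|a l1 IH]; simpl; [tauto|].
  destruct l1 as [|b l1]; simpl in *; [tauto|]. rewrite IH. tauto.
Qed.

Lemma walk_rev l : walk l -> walk (rev l).
Proof.
  induction l as [|a l IH]; simpl; auto.
  destruct l as [|b l]; simpl; auto.
  intros [Hab Hw]. specialize (IH Hw). simpl in IH.
  rewrite <- app_assoc. simpl. apply walk_app. split; auto.
  simpl. split; auto. apply adj_sym; auto.
Qed.

Lemma PE_rev l s : PE (rev l) s <-> PE l s.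
Proof.
  induction l as [|a l IH]; simpl; [tauto|].
  destruct l as [|b l]; simpl; [tauto|].
  simpl in IH. rewrite <- app_assoc. simpl. rewrite PE_app. rewrite IH. simpl. tauto.
Qed.

Lemma walk_nth l d i : walk l -> i + 1 < length l -> adj G (nth i l d) (nth (i+1) l d).
Proof.
  revert i. induction l as [|a l IH]; intros i Hw Hi; simpl in *; [lia|].
  destruct l as [|b l]; simpl in *; [lia|].
  destruct Hw as [Hab Hw]. destruct i as [|i]; simpl; auto.
  specialize (IH i Hw ltac:(lia)). simpl in IH. auto.
Qed.

Lemma nth_walk l d : (forall i, i + 1 < length l -> adj G (nth i l d) (nth (i+1) l d)) -> walk l.
Proof.
  induction l as [|a l IH]; intros H; simpl; auto.
  destruct l as [|b l]; auto. split.
  - apply (H 0). simpl; lia.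
  - apply IH. intros i Hi. apply (H (S i)). simpl in *; lia.
Qed.

Lemma PE_nth l d s : PE l s <-> exists i, i + 1 < length l /\ ends s (nth i l d) /\ ends s (nth (i+1) l d).
Proof.
  induction l as [|a l IH]; simpl.
  - split; [tauto|]. intros (i & Hi & _); lia.
  - destruct l as [|b l].
    + split; [tauto|]. intros (i & Hi & _); simpl in Hi; lia.
    + rewrite IH. split.
      * intros [[H1 H2] | (i & Hi & H1 & H2)].
        -- exists 0. simpl; split; [lia|auto].
        -- exists (S i). simpl in *. split; [lia|auto].
      * intros (i & Hi & H1 & H2). destruct i as [|i].
        -- left. simpl in *; auto.
        -- right. exists i. simpl in *. split; [lia|auto].
Qed.

Lemma PE_in l s w : walk l -> PE l s -> ends s w -> In w l.
Proof.
  induction l as [|a l IH]; simpl; [tauto|].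
  destruct l as [|b l]; [tauto|].
  intros [[Hab _] Hw] [[H1 H2] | H] Hsw.
  - rewrite (ends_char G s a b Hab H1 H2) in Hsw. destruct Hsw; subst; simpl; auto.
  - right. auto.
Qed.

Lemma PE_J c J h s : PE (c :: J ++ [h]) s -> J <> [] -> exists w, In w J /\ ends s w.
Proof.
  revert c. induction J as [|w J IH]; intros c H Hne; [congruence|].
  simpl in H. destruct H as [[H1 H2] | H].
  - exists w; simpl; auto.
  - destruct J as [|w' J].
    + simpl in H. destruct H as [[H1 H2]|[]]. exists w; simpl; auto.
    + destruct (IH w H ltac:(congruence)) as (x & Hx & Hs). exists x; simpl; auto.
Qed.

Lemma PE2 a b s : PE [a; b] s <-> ends s a /\ ends s b.
Proof. simpl; tauto. Qed.

Lemma walk_cons a l : walk (a :: l) -> walk l.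
Proof. destruct l; simpl; tauto. Qed.

Lemma adj_edge a b : adj G a b -> exists s, ends s a /\ ends s b.
Proof. intros [_ H]; auto. Qed.

Lemma cyc_circuit a t : NoDup (a :: t) -> 2 <= length t -> walk (a :: t ++ [a]) ->
  is_circuit G (PE (a :: t ++ [a])).
Proof.
  intros Hnd Hlen Hw.
  set (L := a :: t ++ [a]).
  set (n := length (a :: t)).
  assert (HL : length L = n + 1) by (unfold L, n; simpl; rewrite length_app; simpl; lia).
  assert (HnL : forall i, i < n -> nth i L a = nth i (a :: t) a).
  { intros i Hi. unfold L. change (a :: t ++ [a]) with ((a :: t) ++ [a]). apply app_nth1. auto. }
  assert (HnL2 : nth n L a = a).
  { unfold L, n. change (a :: t ++ [a]) with ((a :: t) ++ [a]). rewrite app_nth2 by lia.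
    rewrite Nat.sub_diag. reflexivity. }
  assert (Hadj : forall i, i < n -> adj G (nth i L a) (nth (i+1) L a)).
  { intros i Hi. apply walk_nth; auto. lia. }
  destruct (adj_edge _ _ (Hadj 0 ltac:(unfold n; simpl; lia))) as (s0 & _).
  set (e := fun i => epsilon (inhabits s0) (fun s => ends s (nth i L a) /\ ends s (nth (i+1) L a))).
  assert (He : forall i, i < n -> ends (e i) (nth i L a) /\ ends (e i) (nth (i+1) L a)).
  { intros i Hi. unfold e. apply epsilon_spec. apply adj_edge. auto. }
  assert (Hv1 : forall i, i < n -> nth ((i+1) mod n) L a = nth (i+1) L a).
  { intros i Hi. rewrite mod_nxt by auto. unfold nxt. destruct (Nat.eqb_spec (i+1) n).
    - rewrite e0, HnL2. simpl. reflexivity.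
    - reflexivity. }
  exists n, (fun i => nth i L a), e. split; [unfold n; simpl; lia|]. split; [|split].
  - intros i j Hi Hj Heq. rewrite (HnL i Hi), (HnL j Hj) in Heq.
    eapply (proj1 (NoDup_nth (a :: t) a)); eauto.
  - intros i Hi. rewrite Hv1 by auto. auto.
  - intros x. rewrite (PE_nth L a x). split.
    + intros (i & Hi & H1 & H2). exists i. split; [lia|].
      destruct (He i ltac:(lia)) as [H3 H4].
      destruct (Hadj i ltac:(lia)) as [Hne _].
      eapply edge_uniq; eauto.
    + intros (i & Hi & <-). exists i. split; [lia|]. apply He; auto.
Qed.

Lemma circuit_cyc (C : E G -> Prop) : is_circuit G C ->
  exists a t, NoDup (a :: t) /\ 2 <= length t /\ walk (a :: t ++ [a]) /\
    forall s, C s <-> PE (a :: t ++ [a]) s.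
Proof.
  intros HC. destruct (circ_data G C HC) as (n & v & e & Hn & Hinj & He & HCe).
  exists (v 0), (map v (seq 1 (n - 1))).
  assert (Heq : v 0 :: map v (seq 1 (n-1)) = map v (seq 0 n)).
  { destruct n as [|n]; [lia|]. simpl. rewrite Nat.sub_0_r. reflexivity. }
  set (L := v 0 :: map v (seq 1 (n - 1)) ++ [v 0]).
  assert (HL : L = map v (seq 0 n) ++ [v 0]) by (unfold L; rewrite <- Heq; reflexivity).
  assert (HlenL : length L = n + 1) by (rewrite HL, length_app, length_map, length_seq; simpl; lia).
  assert (Hn1 : forall i, i < n -> nth i L (v 0) = v i).
  { intros i Hi. rewrite HL, app_nth1 by (rewrite length_map, length_seq; auto).
    rewrite map_nth, seq_nth; auto. }
  assert (Hn2 : nth n L (v 0) = v 0).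
  { rewrite HL, app_nth2 by (rewrite length_map, length_seq; auto).
    rewrite length_map, length_seq, Nat.sub_diag. reflexivity. }
  assert (Hnx : forall i, i < n -> nth (i+1) L (v 0) = v (nxt n i)).
  { intros i Hi. unfold nxt. destruct (Nat.eqb_spec (i+1) n).
    - rewrite e0. auto.
    - apply Hn1. lia. }
  assert (Hnxl : forall i, i < n -> nxt n i < n) by (intros i Hi; unfold nxt; destruct (Nat.eqb_spec (i+1) n); lia).
  assert (Hne : forall i, i < n -> v i <> v (nxt n i)).
  { intros i Hi H. apply Hinj in H; auto. unfold nxt in H; destruct (Nat.eqb_spec (i+1) n); lia. }
  split; [|split; [|split]].
  - rewrite Heq. apply (NoDup_nth _ (v 0)). rewrite length_map, length_seq.
    intros i j Hi Hj. rewrite !map_nth, !seq_nth by auto. simpl. apply Hinj; auto.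
  - rewrite length_map, length_seq. lia.
  - fold L. apply (nth_walk _ (v 0)). intros i Hi. rewrite HlenL in Hi.
    rewrite Hn1, Hnx by lia. split; [apply Hne; lia|].
    exists (e i). split; apply He; try lia; auto.
  - intro s. fold L. rewrite HCe, (PE_nth L (v 0)). split.
    + intros (i & Hi & <-). exists i. rewrite HlenL, Hn1, Hnx by auto. split; [lia|].
      split; apply He; auto.
    + intros (i & Hi & H1 & H2). rewrite HlenL in Hi. rewrite Hn1, Hnx in * by lia.
      exists i. split; [lia|]. apply (edge_uniq G _ _ (v i) (v (nxt n i))); auto.
      * apply Hne; lia.
      * apply (He i ltac:(lia)); left; reflexivity.
      * apply (He i ltac:(lia)); right; reflexivity.
Qed.

End Lists.

Section Walks.
Variable G : graph.

Lemma last_indep {A} (x : A) l d d' : last (x :: l) d = last (x :: l) d'.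
Proof. revert x. induction l as [|y l IH]; intros x; simpl; auto. destruct l; auto. apply (IH y). Qed.

Lemma last_app_cons {A} (l1 : list A) x l2 d : last (l1 ++ x :: l2) d = last (x :: l2) x.
Proof.
  induction l1 as [|a l1 IH]; simpl.
  - apply last_indep.
  - destruct l1; simpl in *; destruct l2; auto; rewrite <- IH; auto.
Qed.

Lemma In_last {A} (x : A) l : In (last (x :: l) x) (x :: l).
Proof.
  revert x. induction l as [|y l IH]; intros x; simpl; auto.
  right. change (In (last (y :: l) x) (y :: l)). rewrite (last_indep y l x y). apply IH.
Qed.

Lemma walk_fun (w : nat -> V G) k n :
  (forall i, k <= i < k + n -> adj G (w i) (w (i+1))) ->
  walk G (map w (seq k (S n))) /\ last (map w (seq k (S n))) (w k) = w (k + n) /\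
  (forall x, In x (map w (seq k (S n))) -> exists i, k <= i <= k + n /\ x = w i).
Proof.
  revert k. induction n as [|n IH]; intros k H.
  - simpl. rewrite Nat.add_0_r. split; auto. split; auto.
    intros x [<- | []]. exists k; split; [lia|auto].
  - destruct (IH (S k)) as (H1 & H2 & H3).
    { intros i Hi. apply H. lia. }
    change (map w (seq k (S (S n)))) with (w k :: map w (seq (S k) (S n))).
    split; [|split].
    + change (map w (seq (S k) (S n))) with (w (S k) :: map w (seq (S (S k)) n)) in *.
      split; auto. replace (S k) with (k + 1) by lia. apply H. lia.
    + change (map w (seq (S k) (S n))) with (w (S k) :: map w (seq (S (S k)) n)) in *.
      change (last (w k :: w (S k) :: map w (seq (S (S k)) n)) (w k)) with
        (last (w (S k) :: map w (seq (S (S k)) n)) (w k)).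
      rewrite (last_indep _ _ _ (w (S k))), H2. f_equal; lia.
    + intros x [<- | Hx].
      * exists k; split; [lia|auto].
      * destruct (H3 x Hx) as (i & Hi & ->). exists i; split; [lia|auto].
Qed.

Lemma ja_list X u v : joined_avoiding G X u v ->
  exists l, walk G (u :: l) /\ last (u :: l) u = v /\ forall x, In x (u :: l) -> ~ X x.
Proof.
  intros (n & w & H0 & Hn & Hav & Hadj).
  destruct (walk_fun w 0 n) as (H1 & H2 & H3).
  { intros i Hi. apply Hadj. lia. }
  exists (map w (seq 1 n)).
  assert (Heq : u :: map w (seq 1 n) = map w (seq 0 (S n))) by (simpl; rewrite H0; auto).
  rewrite Heq. split; auto. split.
  - rewrite <- H0, H2. auto.
  - intros x Hx. destruct (H3 x Hx) as (i & Hi & ->). apply Hav. lia.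
Qed.

Lemma shorten l b : walk G (b :: l) -> exists l', walk G (b :: l') /\ NoDup (b :: l') /\
  last (b :: l') b = last (b :: l) b /\ forall x, In x (b :: l') -> In x (b :: l).
Proof.
  revert b. induction l as [|b' l IH]; intros b Hw.
  - exists []. split; auto. split; [constructor; [simpl; auto | constructor]|]. split; auto.
  - destruct Hw as [Hbb Hw].
    destruct (IH b' Hw) as (p & Hwp & Hnd & Hl & Hin).
    assert (Hlast : last (b :: b' :: l) b = last (b' :: l) b') by (simpl; destruct l; auto; apply last_indep).
    destruct (classic (In b (b' :: p))) as [Hb | Hb].
    + apply in_split in Hb. destruct Hb as (p1 & p2 & Hp).
      exists p2. rewrite Hp in Hwp, Hnd, Hin, Hl. split; [|split; [|split]].
      * apply walk_app in Hwp. tauto.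
      * apply NoDup_app_remove_l in Hnd. auto.
      * rewrite Hlast, <- Hl, last_app_cons. auto.
      * intros x Hx. assert (In x (p1 ++ b :: p2)) by (apply in_app_iff; right; auto).
        apply Hin in H. simpl in *; tauto.
    + exists (b' :: p). split; [|split; [|split]].
      * split; auto.
      * constructor; auto.
      * rewrite Hlast, <- Hl. change (last (b :: b' :: p) b) with (last (b' :: p) b). apply last_indep.
      * intros x [<- | Hx]; simpl; auto. apply Hin in Hx. simpl in *; tauto.
Qed.

Lemma first_hit (VH : list (V G)) l : (exists x, In x l /\ In x VH) ->
  exists p1 h p2, l = p1 ++ h :: p2 /\ In h VH /\ forall x, In x p1 -> ~ In x VH.
Proof.
  induction l as [|a l IH]; intros (x & Hx & HxV); [destruct Hx|].
  destruct (classic (In a VH)) as [Ha | Ha].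
  - exists [], a, l. simpl. auto.
  - destruct Hx as [<- | Hx]; [tauto|].
    destruct IH as (p1 & h & p2 & -> & Hh & Hp). { eauto. }
    exists (a :: p1), h, p2. split; auto. split; auto.
    intros y [<- | Hy]; auto.
Qed.

Lemma last_exit (VH : list (V G)) l b : walk G (b :: l) -> In b VH -> ~ In (last (b :: l) b) VH ->
  exists c w l2, In c VH /\ ~ In w VH /\ adj G c w /\ walk G (w :: l2) /\
    last (w :: l2) w = last (b :: l) b /\ length l2 < length l.
Proof.
  revert b. induction l as [|b' l IH]; intros b Hw Hb Hl; [simpl in Hl; tauto|].
  destruct Hw as [Hbb Hw].
  assert (Hlast : last (b :: b' :: l) b = last (b' :: l) b') by (simpl; destruct l; auto; apply last_indep).
  rewrite Hlast in *.
  destruct (classic (In b' VH)) as [Hb' | Hb'].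
  - destruct (IH b' Hw Hb' Hl) as (c & w & l2 & H1 & H2 & H3 & H4 & H5 & H6).
    exists c, w, l2. do 4 (split; [auto|]). split; [auto| simpl; lia].
  - exists b, b', l. do 4 (split; [auto|]). split; [auto| simpl; lia].
Qed.

Definition ear (VH : list (V G)) (EH : E G -> Prop) c J h :=
  c <> h /\ In c VH /\ In h VH /\ walk G (c :: J ++ [h]) /\ NoDup J /\
  (forall x, In x J -> ~ In x VH) /\ (forall t, PE G (c :: J ++ [h]) t -> ~ EH t).

Lemma ear_exists (VH : list (V G)) (EH : E G -> Prop) c d w s :
  (forall x : V G, connected_minus G (fun y => y = x)) ->
  In c VH -> In d VH -> d <> c ->
  (forall t, EH t -> forall x, ends t x -> In x VH) ->
  ends s c -> ends s w -> c <> w -> ~ EH s ->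
  exists J h, ear VH EH c J h /\ PE G (c :: J ++ [h]) s /\ In w (c :: J ++ [h]).
Proof.
  intros Hcon Hc Hd Hdc HEH Hsc Hsw Hcw Hs.
  destruct (classic (In w VH)) as [Hw | Hw].
  - exists [], w. split; [|split; simpl; auto].
    unfold ear. split; [auto|]. split; [auto|]. split; [auto|].
    split; [|split; [constructor|split; [intros x []|]]].
    + simpl. split; [split; [auto| exists s; auto]| auto].
    + intros t Ht. simpl in Ht. destruct Ht as [[H1 H2]|[]].
      rewrite (edge_uniq G t s c w Hcw H1 H2 Hsc Hsw). auto.
  - assert (Hwc : w <> c) by auto.
    destruct (ja_list _ _ _ (Hcon c w d Hwc Hdc)) as (l & Hwl & Hlast & Hav).
    destruct (shorten l w Hwl) as (l' & Hw' & Hnd & Hl' & Hin').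
    destruct (first_hit VH (w :: l')) as (p1 & h & p2 & Hp & Hh & Hp1).
    { exists d. split; auto. rewrite <- Hlast, <- Hl'. apply In_last. }
    destruct p1 as [|w0 p1].
    { simpl in Hp. inversion Hp. subst. tauto. }
    simpl in Hp. inversion Hp. subst w0. clear Hp.
    exists (w :: p1), h. rewrite H1 in Hw', Hnd, Hin'.
    assert (Hhc : c <> h).
    { intro Hch. apply (Hav h); auto. apply Hin'. simpl. right. apply in_app_iff. simpl. auto. }
    split; [|split].
    + unfold ear. split; [auto|]. split; [auto|]. split; [auto|]. split; [|split; [|split]].
      * change (c :: (w :: p1) ++ [h]) with (c :: (w :: p1 ++ [h])). split.
        -- split; [auto| exists s; auto].
        -- change (w :: p1 ++ h :: p2) with ((w :: p1) ++ h :: p2) in Hw'.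
           apply walk_app in Hw'. tauto.
      * change (w :: p1 ++ h :: p2) with ((w :: p1) ++ h :: p2) in Hnd.
        apply NoDup_app_remove_r in Hnd. auto.
      * exact Hp1.
      * intros t Ht HEt. destruct (PE_J G c (w :: p1) h t Ht ltac:(congruence)) as (x & Hx & Htx).
        apply (Hp1 x Hx). apply (HEH t HEt x Htx).
    + simpl. left. auto.
    + simpl. auto.
Qed.

End Walks.

Definition disj {A} (l1 l2 : list A) := forall x, In x l1 -> In x l2 -> False.

Lemma nd_app {A} (l1 l2 : list A) : NoDup (l1 ++ l2) <-> NoDup l1 /\ NoDup l2 /\ disj l1 l2.
Proof.
  unfold disj. split.
  - intros H. split; [eapply NoDup_app_remove_r; eauto|]. split; [eapply NoDup_app_remove_l; eauto|].
    induction l1 as [|a l1 IH]; simpl in *; [tauto|].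
    inversion H as [|a' l' Hn Hnd]; subst. intros x Hx Hx2. destruct Hx as [Hx | Hx].
    + subst x. apply Hn. apply in_app_iff; auto.
    + exact (IH Hnd x Hx Hx2).
  - intros (H1 & H2 & H3). apply NoDup_app; auto; intros a Ha Hb; eapply H3; eauto.
Qed.

Lemma nd_cons {A} (a : A) l : NoDup (a :: l) <-> ~ In a l /\ NoDup l.
Proof. split; [intros H; inversion H; auto | intros [H1 H2]; constructor; auto]. Qed.

Lemma nd_rev {A} (l : list A) : NoDup (rev l) <-> NoDup l.
Proof. split; intros H; [rewrite <- (rev_involutive l)|]; apply NoDup_rev; auto. Qed.

Lemma nd_nil {A} : NoDup (@nil A) <-> True.
Proof. split; auto; constructor. Qed.

Lemma ni_app {A} (a : A) l1 l2 : ~ In a (l1 ++ l2) <-> ~ In a l1 /\ ~ In a l2.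
Proof. rewrite in_app_iff. tauto. Qed.
Lemma ni_cons {A} (a b : A) l : ~ In a (b :: l) <-> b <> a /\ ~ In a l.
Proof. simpl. tauto. Qed.
Lemma ni_rev {A} (a : A) l : ~ In a (rev l) <-> ~ In a l.
Proof. rewrite <- in_rev. tauto. Qed.
Lemma ni_nil {A} (a : A) : ~ In a [] <-> True.
Proof. simpl. tauto. Qed.

Lemma dj_app_l {A} (l1 l2 l3 : list A) : disj (l1 ++ l2) l3 <-> disj l1 l3 /\ disj l2 l3.
Proof. unfold disj. setoid_rewrite in_app_iff. firstorder. Qed.
Lemma dj_app_r {A} (l1 l2 l3 : list A) : disj l1 (l2 ++ l3) <-> disj l1 l2 /\ disj l1 l3.
Proof. unfold disj. setoid_rewrite in_app_iff. firstorder. Qed.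
Lemma dj_cons_l {A} (a : A) l1 l2 : disj (a :: l1) l2 <-> ~ In a l2 /\ disj l1 l2.
Proof. unfold disj. simpl. firstorder. subst; eauto. Qed.
Lemma dj_cons_r {A} (a : A) l1 l2 : disj l1 (a :: l2) <-> ~ In a l1 /\ disj l1 l2.
Proof. unfold disj. simpl. firstorder. subst; eauto. Qed.
Lemma dj_rev_l {A} (l1 l2 : list A) : disj (rev l1) l2 <-> disj l1 l2.
Proof. unfold disj. setoid_rewrite <- in_rev. tauto. Qed.
Lemma dj_rev_r {A} (l1 l2 : list A) : disj l1 (rev l2) <-> disj l1 l2.
Proof. unfold disj. setoid_rewrite <- in_rev. tauto. Qed.
Lemma dj_nil_l {A} (l : list A) : disj [] l <-> True.
Proof. unfold disj. simpl. tauto. Qed.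
Lemma dj_nil_r {A} (l : list A) : disj l [] <-> True.
Proof. unfold disj. simpl. firstorder. Qed.
Lemma disj_sym {A} (l1 l2 : list A) : disj l1 l2 -> disj l2 l1.
Proof. unfold disj. eauto. Qed.

Ltac nd_simp :=
  repeat first [ rewrite nd_app in * | rewrite nd_cons in * | rewrite nd_rev in * | rewrite nd_nil in *
               | rewrite ni_app in * | rewrite ni_cons in * | rewrite ni_rev in * | rewrite ni_nil in *
               | rewrite dj_app_l in * | rewrite dj_app_r in * | rewrite dj_cons_l in * | rewrite dj_cons_r in *
               | rewrite dj_rev_l in * | rewrite dj_rev_r in * | rewrite dj_nil_l in * | rewrite dj_nil_r in * ].

Ltac nd_solve :=
  nd_simp; repeat match goal with H : _ /\ _ |- _ => destruct H end;
  repeat split; try first [ assumption | apply disj_sym; assumption | apply not_eq_sym; assumption | tauto ].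


Section Pairs.
Variable G : graph.

Definition cE u v (I J : list (V G)) s := PE G (u :: I ++ [v]) s \/ PE G (u :: J ++ [v]) s.

Lemma rev_path (u v : V G) J : rev (u :: J ++ [v]) = v :: rev J ++ [u].
Proof. simpl. rewrite rev_app_distr. simpl. reflexivity. Qed.

Lemma circ_ext (C D : E G -> Prop) : is_circuit G C -> (forall s, C s <-> D s) -> is_circuit G D.
Proof.
  intros (n & v & e & H1 & H2 & H3 & H4) H. exists n, v, e.
  split; [auto|]. split; [auto|]. split; [auto|]. intro x. rewrite <- H. apply H4.
Qed.

Lemma pair_circ u v I J : NoDup (u :: v :: I ++ J) -> walk G (u :: I ++ [v]) -> walk G (u :: J ++ [v]) ->
  I ++ J <> [] -> is_circuit G (cE u v I J).
Proof.
  intros Hnd HwI HwJ Hne.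
  assert (Hl : u :: (I ++ v :: rev J) ++ [u] = (u :: I) ++ v :: (rev J ++ [u])).
  { simpl. rewrite <- app_assoc. reflexivity. }
  assert (HvJ : v :: rev J ++ [u] = rev (u :: J ++ [v])) by (rewrite rev_path; auto).
  apply (circ_ext (PE G (u :: (I ++ v :: rev J) ++ [u]))).
  - apply cyc_circuit.
    + clear - Hnd. nd_solve.
    + rewrite length_app. simpl. rewrite length_rev. destruct I; destruct J; simpl in *; try congruence; lia.
    + rewrite Hl, walk_app. split; auto. rewrite HvJ. apply walk_rev. auto.
  - intro s. rewrite Hl, PE_app. unfold cE. rewrite HvJ, PE_rev. tauto.
Qed.

Lemma app_last_ex {A} (l1 l2 l3 : list A) (v x : A) : l1 ++ x :: l2 = l3 ++ [v] -> exists Y1, x :: l2 = Y1 ++ [v].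
Proof.
  intros H. exists (removelast (x :: l2)).
  assert (Hl : last (l1 ++ x :: l2) x = v) by (rewrite H, last_last; auto).
  rewrite last_app_cons in Hl. rewrite <- Hl. apply app_removelast_last. congruence.
Qed.

Lemma ext1_theta u v I1 S X c M h Y J :
  NoDup (u :: v :: I1 ++ S) -> walk G (u :: I1 ++ [v]) -> walk G (u :: S ++ [v]) ->
  u :: I1 ++ [v] = X ++ c :: M ++ h :: Y ->
  NoDup J -> disj J (u :: v :: I1 ++ S) ->
  NoDup (c :: h :: M ++ J ++ (rev X ++ S ++ rev Y)) /\ walk G (c :: M ++ [h]) /\
  walk G (c :: (rev X ++ S ++ rev Y) ++ [h]) /\
  (forall s, PE G (c :: (rev X ++ S ++ rev Y) ++ [h]) s <->
     PE G (X ++ [c]) s \/ PE G (u :: S ++ [v]) s \/ PE G (h :: Y) s) /\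
  (forall s, PE G (u :: I1 ++ [v]) s <-> PE G (X ++ [c]) s \/ PE G (c :: M ++ [h]) s \/ PE G (h :: Y) s).
Proof.
  intros Hnd HwR HwS HR HJ HJd.
  assert (HX1 : exists X1, X ++ [c] = u :: X1).
  { destruct X as [|x X'].
    - simpl in HR. inversion HR. exists []. auto.
    - simpl in HR. inversion HR. exists (X' ++ [c]). auto. }
  destruct HX1 as (X1 & HX1).
  assert (HY1 : exists Y1, h :: Y = Y1 ++ [v]).
  { apply (app_last_ex (X ++ c :: M) Y (u :: I1)). rewrite <- app_assoc. simpl. rewrite <- HR. reflexivity. }
  destruct HY1 as (Y1 & HY1).
  assert (E1 : c :: rev X = rev X1 ++ [u]).
  { change (rev X1 ++ [u]) with (rev (u :: X1)). rewrite <- HX1, rev_app_distr. reflexivity. }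
  assert (E2 : rev Y ++ [h] = v :: rev Y1).
  { change (rev Y ++ [h]) with (rev (h :: Y)). rewrite HY1, rev_app_distr. reflexivity. }
  assert (EN : c :: (rev X ++ S ++ rev Y) ++ [h] = rev X1 ++ u :: (S ++ v :: rev Y1)).
  { rewrite <- !app_assoc. change (c :: rev X ++ S ++ rev Y ++ [h]) with ((c :: rev X) ++ S ++ (rev Y ++ [h])).
    rewrite E1, E2. rewrite <- app_assoc. reflexivity. }
  assert (ER : u :: I1 ++ [v] = X ++ c :: (M ++ h :: Y)) by (rewrite HR; reflexivity).
  assert (HwR' := HwR). rewrite ER in HwR'. apply walk_app in HwR'. destruct HwR' as [Hw1 Hw2].
  change (c :: M ++ h :: Y) with ((c :: M) ++ h :: Y) in Hw2. apply walk_app in Hw2. destruct Hw2 as [Hw2 Hw3].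
  assert (EPS : forall s, PE G (u :: S ++ v :: rev Y1) s <-> PE G (u :: S ++ [v]) s \/ PE G (h :: Y) s).
  { intro s. change (u :: S ++ v :: rev Y1) with ((u :: S) ++ v :: rev Y1). rewrite PE_app.
    replace (v :: rev Y1) with (rev (Y1 ++ [v])) by (rewrite rev_app_distr; reflexivity).
    rewrite PE_rev, <- HY1. tauto. }
  split; [|split; [|split; [|split]]].
  - assert (HndR : NoDup (X ++ c :: M ++ h :: Y)) by (rewrite <- HR; clear - Hnd; nd_solve).
    assert (HdS : disj S (X ++ c :: M ++ h :: Y)) by (rewrite <- HR; clear - Hnd; nd_solve).
    assert (HdJ : disj J (X ++ c :: M ++ h :: Y)) by (rewrite <- HR; clear - HJd; nd_solve).
    assert (HdJS : disj J S) by (clear - HJd; nd_solve).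
    assert (HndS : NoDup S) by (clear - Hnd; nd_solve).
    clear - HndR HdS HdJ HdJS HndS HJ. nd_solve.
  - exact Hw2.
  - rewrite EN. apply walk_app. split.
    + replace (rev X1 ++ [u]) with (rev (u :: X1)) by reflexivity. apply walk_rev. rewrite <- HX1. auto.
    + change (u :: S ++ v :: rev Y1) with ((u :: S) ++ v :: rev Y1). apply walk_app. split; auto.
      replace (v :: rev Y1) with (rev (Y1 ++ [v])) by (rewrite rev_app_distr; reflexivity).
      apply walk_rev. rewrite <- HY1. auto.
  - intro s. rewrite EN, PE_app, EPS.
    replace (rev X1 ++ [u]) with (rev (u :: X1)) by reflexivity. rewrite PE_rev, <- HX1. tauto.
  - intro s. rewrite ER, (PE_app _ X c (M ++ h :: Y)).
    change (c :: M ++ h :: Y) with ((c :: M) ++ h :: Y). rewrite (PE_app _ (c :: M) h Y). tauto.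
Qed.

End Pairs.

Section Pairs2.
Variable G : graph.

Lemma ext2_theta u v X1 c Y1 X2 h Y2 T J :
  NoDup (u :: v :: (X1 ++ c :: Y1) ++ (X2 ++ h :: Y2) ++ T) ->
  walk G (u :: (X1 ++ c :: Y1) ++ [v]) -> walk G (u :: (X2 ++ h :: Y2) ++ [v]) -> walk G (u :: T ++ [v]) ->
  NoDup J -> disj J (u :: v :: (X1 ++ c :: Y1) ++ (X2 ++ h :: Y2) ++ T) ->
  NoDup (c :: h :: J ++ (rev X1 ++ u :: X2) ++ (Y1 ++ v :: rev Y2)) /\
  NoDup (c :: h :: J ++ (rev X1 ++ u :: T ++ v :: rev Y2)) /\
  walk G (c :: (rev X1 ++ u :: X2) ++ [h]) /\ walk G (c :: (Y1 ++ v :: rev Y2) ++ [h]) /\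
  walk G (c :: (rev X1 ++ u :: T ++ v :: rev Y2) ++ [h]) /\
  (forall s, PE G (u :: (X1 ++ c :: Y1) ++ [v]) s <-> PE G (u :: X1 ++ [c]) s \/ PE G (c :: Y1 ++ [v]) s) /\
  (forall s, PE G (u :: (X2 ++ h :: Y2) ++ [v]) s <-> PE G (u :: X2 ++ [h]) s \/ PE G (h :: Y2 ++ [v]) s) /\
  (forall s, PE G (c :: (rev X1 ++ u :: X2) ++ [h]) s <-> PE G (u :: X1 ++ [c]) s \/ PE G (u :: X2 ++ [h]) s) /\
  (forall s, PE G (c :: (Y1 ++ v :: rev Y2) ++ [h]) s <-> PE G (c :: Y1 ++ [v]) s \/ PE G (h :: Y2 ++ [v]) s) /\
  (forall s, PE G (c :: (rev X1 ++ u :: T ++ v :: rev Y2) ++ [h]) s <->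
      PE G (u :: X1 ++ [c]) s \/ PE G (u :: T ++ [v]) s \/ PE G (h :: Y2 ++ [v]) s).
Proof.
  intros Hnd HwR HwS HwT HJ HJd.
  assert (LR : u :: (X1 ++ c :: Y1) ++ [v] = (u :: X1) ++ c :: (Y1 ++ [v])) by (simpl; rewrite <- app_assoc; reflexivity).
  assert (LS : u :: (X2 ++ h :: Y2) ++ [v] = (u :: X2) ++ h :: (Y2 ++ [v])) by (simpl; rewrite <- app_assoc; reflexivity).
  assert (LA : c :: (rev X1 ++ u :: X2) ++ [h] = (c :: rev X1) ++ u :: (X2 ++ [h])) by (simpl; rewrite <- app_assoc; reflexivity).
  assert (LB : c :: (Y1 ++ v :: rev Y2) ++ [h] = (c :: Y1) ++ v :: (rev Y2 ++ [h])) by (simpl; rewrite <- app_assoc; reflexivity).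
  assert (LC : c :: (rev X1 ++ u :: T ++ v :: rev Y2) ++ [h] = (c :: rev X1) ++ u :: ((T ++ v :: rev Y2) ++ [h]))
    by (simpl; rewrite <- app_assoc; reflexivity).
  assert (LC2 : u :: (T ++ v :: rev Y2) ++ [h] = (u :: T) ++ v :: (rev Y2 ++ [h])) by (simpl; rewrite <- app_assoc; reflexivity).
  assert (R1 : (c :: rev X1) ++ [u] = rev (u :: X1 ++ [c])) by (rewrite rev_path; reflexivity).
  assert (R2 : v :: rev Y2 ++ [h] = rev (h :: Y2 ++ [v])) by (rewrite rev_path; reflexivity).
  rewrite LR, walk_app in HwR. rewrite LS, walk_app in HwS.
  destruct HwR as [HwR1 HwR2]. destruct HwS as [HwS1 HwS2].
  split; [|split; [|split; [|split; [|split; [|split; [|split; [|split; [|split]]]]]]]].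
  - clear - Hnd HJ HJd. nd_solve.
  - clear - Hnd HJ HJd. nd_solve.
  - rewrite LA, walk_app, R1. split; apply walk_rev || auto. auto.
  - rewrite LB, walk_app, R2. split; auto. apply walk_rev; auto.
  - rewrite LC, walk_app, R1, LC2, walk_app, R2. split; [apply walk_rev; auto|]. split; auto. apply walk_rev; auto.
  - intro s. rewrite LR, PE_app. tauto.
  - intro s. rewrite LS, PE_app. tauto.
  - intro s. rewrite LA, PE_app, R1, PE_rev. tauto.
  - intro s. rewrite LB, PE_app, R2, PE_rev. tauto.
  - intro s. rewrite LC, PE_app, R1, PE_rev, LC2, PE_app, R2, PE_rev. tauto.
Qed.

End Pairs2.

Section Main.
Variables G G' : graph.
Variable f : E G -> E G'.
Hypothesis hc : forall C, is_circuit G C -> is_circuit G' (image f C).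

Lemma img_ext (C D : E G -> Prop) : seteq G C D -> seteq G' (image f C) (image f D).
Proof. intros H y. unfold image. split; intros (x & Hx & <-); exists x; split; auto; apply H; auto. Qed.

Lemma seteq_trans {H : graph} (A B C : E H -> Prop) : seteq H A B -> seteq H B C -> seteq H A C.
Proof. intros H1 H2 s. rewrite (H1 s). apply H2. Qed.

Lemma img_thU O K1 K2 : thU G O K1 K2 -> thU G' (image f O) (image f K1) (image f K2).
Proof.
  intros (H1 & H2 & H3). split; [|split]; intros y (x & Hx & <-).
  - destruct (H1 x Hx); [left|right]; exists x; auto.
  - destruct (H2 x Hx); [left|right]; exists x; auto.
  - destruct (H3 x Hx); [left|right]; exists x; auto.
Qed.

Lemma tri_G Z O1 O2 O3 K1 K2 K3 :
  is_circuit G O1 -> is_circuit G O2 -> is_circuit G O3 ->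
  is_circuit G K1 -> is_circuit G K2 -> is_circuit G K3 ->
  seteq G' (image f O1) Z -> seteq G' (image f O2) Z -> seteq G' (image f O3) Z ->
  thU G O1 K1 K2 -> thU G O2 K1 K3 -> thU G O3 K2 K3 ->
  seteq G' (image f K1) Z /\ seteq G' (image f K2) Z /\ seteq G' (image f K3) Z.
Proof. intros. apply (th_tri G' Z (image f O1) (image f O2) (image f O3)); auto using img_thU. Qed.

Definition theta u v (I1 I2 I3 : list (V G)) :=
  NoDup (u :: v :: I1 ++ I2 ++ I3) /\ walk G (u :: I1 ++ [v]) /\ walk G (u :: I2 ++ [v]) /\
  walk G (u :: I3 ++ [v]) /\ I1 ++ I2 <> [] /\ I1 ++ I3 <> [] /\ I2 ++ I3 <> [].

Definition good Z u v I1 I2 I3 := theta u v I1 I2 I3 /\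
  seteq G' (image f (cE G u v I1 I2)) Z /\ seteq G' (image f (cE G u v I1 I3)) Z /\
  seteq G' (image f (cE G u v I2 I3)) Z.

Definition EH u v (I1 I2 I3 : list (V G)) s :=
  PE G (u :: I1 ++ [v]) s \/ PE G (u :: I2 ++ [v]) s \/ PE G (u :: I3 ++ [v]) s.

Definition VH u v (I1 I2 I3 : list (V G)) := u :: v :: I1 ++ I2 ++ I3.

Lemma cE_sym u v I J : seteq G (cE G u v I J) (cE G u v J I).
Proof. intro s. unfold cE. tauto. Qed.

Lemma app_nil_sym {A} (l1 l2 : list A) : l1 ++ l2 <> [] -> l2 ++ l1 <> [].
Proof. destruct l1; destruct l2; simpl; congruence. Qed.

Lemma good_12 Z u v I1 I2 I3 : good Z u v I1 I2 I3 -> good Z u v I2 I1 I3.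
Proof.
  intros ((Hnd & H1 & H2 & H3 & N12 & N13 & N23) & Z12 & Z13 & Z23).
  split; [|split; [|split]].
  - split; [clear - Hnd; nd_solve|]. repeat split; auto using app_nil_sym.
  - apply (seteq_trans _ _ _ (img_ext _ _ (cE_sym _ _ _ _))). auto.
  - auto.
  - auto.
Qed.

Lemma good_23 Z u v I1 I2 I3 : good Z u v I1 I2 I3 -> good Z u v I1 I3 I2.
Proof.
  intros ((Hnd & H1 & H2 & H3 & N12 & N13 & N23) & Z12 & Z13 & Z23).
  split; [|split; [|split]].
  - split; [clear - Hnd; nd_solve|]. repeat split; auto using app_nil_sym.
  - auto.
  - auto.
  - apply (seteq_trans _ _ _ (img_ext _ _ (cE_sym _ _ _ _))). auto.
Qed.

Lemma theta_circ u v I1 I2 I3 : theta u v I1 I2 I3 ->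
  is_circuit G (cE G u v I1 I2) /\ is_circuit G (cE G u v I1 I3) /\ is_circuit G (cE G u v I2 I3).
Proof.
  intros (Hnd & H1 & H2 & H3 & N12 & N13 & N23).
  split; [|split]; apply pair_circ; auto; clear - Hnd; nd_solve.
Qed.

Lemma ear_rev VH0 EH0 c J h : ear G VH0 EH0 c J h -> ear G VH0 EH0 h (rev J) c.
Proof.
  intros (H1 & H2 & H3 & H4 & H5 & H6 & H7).
  assert (E : h :: rev J ++ [c] = rev (c :: J ++ [h])) by (rewrite rev_path; reflexivity).
  split; auto. split; auto. split; auto. split; [|split; [|split]].
  - rewrite E. apply walk_rev. auto.
  - apply NoDup_rev. auto.
  - intros x Hx. apply H6. apply in_rev. auto.
  - intros t Ht. apply H7. rewrite E, PE_rev in Ht. auto.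
Qed.

Lemma ear_mono VH1 VH2 EH1 EH2 c J h : ear G VH1 EH1 c J h ->
  (forall x, In x VH1 <-> In x VH2) -> (forall t, EH1 t <-> EH2 t) -> ear G VH2 EH2 c J h.
Proof.
  intros (H1 & H2 & H3 & H4 & H5 & H6 & H7) HV HE.
  split; auto. split; [apply HV; auto|]. split; [apply HV; auto|]. split; auto. split; auto. split.
  - intros x Hx Hx2. apply (H6 x Hx). apply HV; auto.
  - intros t Ht Ht2. apply (H7 t Ht). apply HE; auto.
Qed.

Definition ext_concl Z c J h := exists u' v' I1' I2' I3', good Z u' v' I1' I2' I3' /\
  (forall t, PE G (c :: J ++ [h]) t -> EH u' v' I1' I2' I3' t) /\
  (forall x, In x (c :: J ++ [h]) -> In x (VH u' v' I1' I2' I3')).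

Lemma ext_concl_rev Z c J h : ext_concl Z h (rev J) c -> ext_concl Z c J h.
Proof.
  intros (u' & v' & I1' & I2' & I3' & Hg & HP & HI).
  assert (E : h :: rev J ++ [c] = rev (c :: J ++ [h])) by (rewrite rev_path; reflexivity).
  exists u', v', I1', I2', I3'. split; auto. split.
  - intros t Ht. apply HP. rewrite E, PE_rev. auto.
  - intros x Hx. apply HI. rewrite E. apply in_rev in Hx. auto.
Qed.

End Main.

Section Ext.
Variables G G' : graph.
Variable f : E G -> E G'.
Hypothesis hc : forall C, is_circuit G C -> is_circuit G' (image f C).

Lemma ext1 Z u v I1 I2 I3 X c M h Y J :
  good G G' f Z u v I1 I2 I3 -> u :: I1 ++ [v] = X ++ c :: M ++ h :: Y ->
  ear G (VH G u v I1 I2 I3) (EH G u v I1 I2 I3) c J h -> ext_concl G G' f Z c J h.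
Proof.
  intros ((Hnd & Hw1 & Hw2 & Hw3 & N12 & N13 & N23) & Z12 & Z13 & Z23) HR
    (Hch & Hc & Hh & HwQ & HndJ & HJV & HQE).
  assert (HJd : disj J (u :: v :: I1 ++ I2 ++ I3)) by (intros x H1 H2; exact (HJV x H1 H2)).
  assert (Nd2 : NoDup (u :: v :: I1 ++ I2)) by (clear - Hnd; nd_solve).
  assert (Nd3 : NoDup (u :: v :: I1 ++ I3)) by (clear - Hnd; nd_solve).
  assert (Jd2 : disj J (u :: v :: I1 ++ I2)) by (clear - HJd; nd_solve).
  assert (Jd3 : disj J (u :: v :: I1 ++ I3)) by (clear - HJd; nd_solve).
  destruct (ext1_theta G u v I1 I2 X c M h Y J Nd2 Hw1 Hw2 HR HndJ Jd2)
    as (NdN2 & HwM & HwN2 & PN2 & PR).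
  destruct (ext1_theta G u v I1 I3 X c M h Y J Nd3 Hw1 Hw3 HR HndJ Jd3)
    as (NdN3 & _ & HwN3 & PN3 & _).
  set (N2 := rev X ++ I2 ++ rev Y) in *.
  set (N3 := rev X ++ I3 ++ rev Y) in *.
  assert (HQ1 : J = [] -> exists s, ends s c /\ ends s h /\ ~ EH G u v I1 I2 I3 s).
  { intros ->. simpl in HwQ. destruct HwQ as [[_ (s & H1 & H2)] _]. exists s. split; auto. split; auto.
    apply HQE. simpl. auto. }
  assert (NMJ : M ++ J <> []).
  { intro H. apply app_eq_nil in H. destruct H as [-> ->].
    destruct (HQ1 eq_refl) as (s & H1 & H2 & H3). apply H3. left. apply PR. right. left. simpl. auto. }
  assert (HXY : X = [] -> Y = [] -> c = u /\ h = v /\ I1 = M).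
  { intros -> ->. simpl in HR. inversion HR. subst. split; auto.
    apply app_inj_tail in H1. destruct H1; subst. auto. }
  assert (NJN : forall S, (S = I2 \/ S = I3) -> J ++ (rev X ++ S ++ rev Y) <> []).
  { intros S HS H. apply app_eq_nil in H. destruct H as [-> H].
    apply app_eq_nil in H. destruct H as [HX H]. apply app_eq_nil in H. destruct H as [HS0 HY].
    apply (f_equal (@rev _)) in HX. apply (f_equal (@rev _)) in HY. rewrite rev_involutive in HX, HY.
    simpl in HX, HY. destruct (HXY HX HY) as (-> & -> & _).
    destruct (HQ1 eq_refl) as (s & H1 & H2 & H3). apply H3. right.
    destruct HS as [-> | ->]; [left|right]; rewrite HS0; simpl; auto. }
  assert (NMN : forall S, (S = I2 \/ S = I3) -> M ++ (rev X ++ S ++ rev Y) <> []).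
  { intros S HS H. apply app_eq_nil in H. destruct H as [-> H].
    apply app_eq_nil in H. destruct H as [HX H]. apply app_eq_nil in H. destruct H as [HS0 HY].
    apply (f_equal (@rev _)) in HX. apply (f_equal (@rev _)) in HY. rewrite rev_involutive in HX, HY.
    simpl in HX, HY. destruct (HXY HX HY) as (_ & _ & ->).
    destruct HS as [-> | ->]; rewrite HS0 in *; simpl in *; congruence. }
  destruct (theta_circ G u v I1 I2 I3 (conj Hnd (conj Hw1 (conj Hw2 (conj Hw3 (conj N12 (conj N13 N23)))))))
    as (CO1 & CO2 & CO3).
  assert (CK1 : is_circuit G (cE G c h M J)) by (apply pair_circ; auto; clear - NdN2; nd_solve).
  assert (CK2 : is_circuit G (cE G c h J N2)) by (apply pair_circ; auto; [clear - NdN2; nd_solve | apply NJN; auto]).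
  assert (CK3 : is_circuit G (cE G c h J N3)) by (apply pair_circ; auto; [clear - NdN3; nd_solve | apply NJN; auto]).
  destruct (tri_G G G' f hc Z _ _ _ _ _ _ CO1 CO2 CO3 CK1 CK2 CK3 Z12 Z13 Z23) as (ZK1 & ZK2 & ZK3).
  { split; [|split]; intros s; specialize (PR s); specialize (PN2 s); unfold cE; tauto. }
  { split; [|split]; intros s; specialize (PR s); specialize (PN3 s); unfold cE; tauto. }
  { split; [|split]; intros s; specialize (PN2 s); specialize (PN3 s); unfold cE; tauto. }
  exists c, h, M, J, N2. split; [|split].
  - split; [|split; [|split]].
    + split; [auto|]. split; [auto|]. split; [auto|]. split; [auto|]. split; [auto|].
      split; [apply NMN; auto | apply NJN; auto].
    + auto.
    + apply (seteq_trans _ (image f (cE G u v I1 I2))); auto.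
      apply img_ext. intros s. specialize (PR s); specialize (PN2 s); unfold cE; tauto.
    + auto.
  - intros t Ht. unfold EH. tauto.
  - intros x Hx. unfold VH. simpl in Hx |- *. rewrite !in_app_iff in *. simpl in Hx. tauto.
Qed.

End Ext.

Section Ext2.
Variables G G' : graph.
Variable f : E G -> E G'.
Hypothesis hc : forall C, is_circuit G C -> is_circuit G' (image f C).

Lemma ne_mid {A} (l1 l2 l3 : list A) x : l1 ++ (l2 ++ x :: l3) <> [].
Proof. destruct l1; destruct l2; simpl; congruence. Qed.

Lemma ext2 Z u v I1 I2 I3 X1 c Y1 X2 h Y2 J :
  good G G' f Z u v I1 I2 I3 -> I1 = X1 ++ c :: Y1 -> I2 = X2 ++ h :: Y2 ->
  ear G (VH G u v I1 I2 I3) (EH G u v I1 I2 I3) c J h -> ext_concl G G' f Z c J h.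
Proof.
  intros ((Hnd & Hw1 & Hw2 & Hw3 & N12 & N13 & N23) & Z12 & Z13 & Z23) HI1 HI2
    (Hch & Hc & Hh & HwQ & HndJ & HJV & HQE).
  assert (HJd : disj J (u :: v :: I1 ++ I2 ++ I3)) by (intros x H1 H2; exact (HJV x H1 H2)).
  destruct (theta_circ G u v I1 I2 I3 (conj Hnd (conj Hw1 (conj Hw2 (conj Hw3 (conj N12 (conj N13 N23)))))))
    as (CO1 & CO2 & CO3).
  subst I1 I2.
  destruct (ext2_theta G u v X1 c Y1 X2 h Y2 I3 J Hnd Hw1 Hw2 Hw3 HndJ HJd)
    as (NdAB & NdC & HwA & HwB & HwC & PR & PS & PA & PB & PC).
  set (A := rev X1 ++ u :: X2) in *.
  set (B := Y1 ++ v :: rev Y2) in *.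
  set (C := rev X1 ++ u :: I3 ++ v :: rev Y2) in *.
  assert (CK1 : is_circuit G (cE G c h J A)) by (apply pair_circ; [clear - NdAB; nd_solve | auto | auto | apply ne_mid]).
  assert (CK2 : is_circuit G (cE G c h J B)) by (apply pair_circ; [clear - NdAB; nd_solve | auto | auto | apply ne_mid]).
  assert (CK3 : is_circuit G (cE G c h J C)) by (apply pair_circ; [clear - NdC; nd_solve | auto | auto | apply ne_mid]).
  destruct (tri_G G G' f hc Z _ _ _ _ _ _ CO1 CO3 CO2 CK1 CK2 CK3 Z12 Z23 Z13) as (ZK1 & ZK2 & ZK3).
  { split; [|split]; intros s; specialize (PR s); specialize (PS s); specialize (PA s); specialize (PB s); unfold cE; tauto. }
  { split; [|split]; intros s; specialize (PS s); specialize (PA s); specialize (PC s); unfold cE; tauto. }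
  { split; [|split]; intros s; specialize (PR s); specialize (PB s); specialize (PC s); unfold cE; tauto. }
  exists c, h, J, A, B. split; [|split].
  - split; [|split; [|split]].
    + split; [auto|]. split; [auto|]. split; [auto|]. split; [auto|].
      split; [apply ne_mid|]. split; [apply ne_mid|]. unfold A. rewrite <- app_assoc. simpl. exact (ne_mid [] (rev X1) (X2 ++ B) u).
    + auto.
    + auto.
    + apply (seteq_trans _ (image f (cE G u v (X1 ++ c :: Y1) (X2 ++ h :: Y2)))); auto.
      apply img_ext. intros s. specialize (PR s); specialize (PS s); specialize (PA s); specialize (PB s); unfold cE; tauto.
  - intros t Ht. unfold EH. tauto.
  - intros x Hx. unfold VH. simpl in Hx |- *. rewrite !in_app_iff in *. simpl in Hx. tauto.
Qed.

Lemma split2 {A} (l : list A) c h : In c l -> In h l -> c <> h ->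
  (exists X M Y, l = X ++ c :: M ++ h :: Y) \/ (exists X M Y, l = X ++ h :: M ++ c :: Y).
Proof.
  intros Hc Hh Hch. apply in_split in Hc. destruct Hc as (l1 & l2 & ->).
  apply in_app_iff in Hh. destruct Hh as [Hh | [Hh | Hh]].
  - right. apply in_split in Hh. destruct Hh as (X & M & ->). exists X, M, l2. rewrite <- app_assoc. reflexivity.
  - congruence.
  - left. apply in_split in Hh. destruct Hh as (M & Y & ->). exists l1, M, Y. reflexivity.
Qed.

Lemma ext_same Z u v I1 I2 I3 c J h :
  good G G' f Z u v I1 I2 I3 -> In c (u :: I1 ++ [v]) -> In h (u :: I1 ++ [v]) ->
  ear G (VH G u v I1 I2 I3) (EH G u v I1 I2 I3) c J h -> ext_concl G G' f Z c J h.
Proof.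
  intros Hg Hc Hh He. assert (Hch : c <> h) by (destruct He; auto).
  destruct (split2 _ c h Hc Hh Hch) as [(X & M & Y & HR) | (X & M & Y & HR)].
  - eapply ext1; eauto.
  - apply ext_concl_rev. eapply ext1; eauto. apply ear_rev. auto.
Qed.

Lemma ear_12 u v I1 I2 I3 c J h : ear G (VH G u v I1 I2 I3) (EH G u v I1 I2 I3) c J h ->
  ear G (VH G u v I2 I1 I3) (EH G u v I2 I1 I3) c J h.
Proof.
  intros He. apply (ear_mono G _ _ _ _ _ _ _ He).
  - intros x. unfold VH. simpl. rewrite !in_app_iff. tauto.
  - intros t. unfold EH. tauto.
Qed.

Lemma ear_23 u v I1 I2 I3 c J h : ear G (VH G u v I1 I2 I3) (EH G u v I1 I2 I3) c J h ->
  ear G (VH G u v I1 I3 I2) (EH G u v I1 I3 I2) c J h.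
Proof.
  intros He. apply (ear_mono G _ _ _ _ _ _ _ He).
  - intros x. unfold VH. simpl. rewrite !in_app_iff. tauto.
  - intros t. unfold EH. tauto.
Qed.

Lemma ext Z u v I1 I2 I3 c J h :
  good G G' f Z u v I1 I2 I3 ->
  ear G (VH G u v I1 I2 I3) (EH G u v I1 I2 I3) c J h -> ext_concl G G' f Z c J h.
Proof.
  intros Hg He.
  assert (P1 : In c (u :: I1 ++ [v]) -> In h (u :: I1 ++ [v]) -> ext_concl G G' f Z c J h)
    by (intros; eapply ext_same; eauto).
  assert (P2 : In c (u :: I2 ++ [v]) -> In h (u :: I2 ++ [v]) -> ext_concl G G' f Z c J h)
    by (intros; apply (ext_same Z u v I2 I1 I3); auto; [apply good_12; auto | apply ear_12; auto]).
  assert (P3 : In c (u :: I3 ++ [v]) -> In h (u :: I3 ++ [v]) -> ext_concl G G' f Z c J h)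
    by (intros; apply (ext_same Z u v I3 I1 I2); auto; [apply good_12, good_23; auto | apply ear_12, ear_23; auto]).
  assert (Q : forall j k, (j = 1 \/ j = 2 \/ j = 3) -> (k = 1 \/ k = 2 \/ k = 3) -> j <> k ->
     In c (nth j [[]; I1; I2; I3] []) -> In h (nth k [[]; I1; I2; I3] []) -> ext_concl G G' f Z c J h).
  { intros j k Hj Hk Hjk Hcj Hhk.
    destruct Hj as [-> | [-> | ->]]; destruct Hk as [-> | [-> | ->]]; try congruence; simpl in Hcj, Hhk;
      apply in_split in Hcj; apply in_split in Hhk;
      destruct Hcj as (X1 & Y1 & HX); destruct Hhk as (X2 & Y2 & HY).
    - eapply ext2; eauto.
    - eapply ext2; [apply good_23; eauto | eauto | eauto | apply ear_23; auto].
    - eapply ext2; [apply good_12; eauto | eauto | eauto | apply ear_12; auto].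
    - eapply ext2; [apply good_23, good_12; eauto | eauto | eauto | apply ear_23, ear_12; auto].
    - eapply ext2; [apply good_12, good_23; eauto | eauto | eauto | apply ear_12, ear_23; auto].
    - eapply ext2; [apply good_23, good_12, good_23; eauto | eauto | eauto | apply ear_23, ear_12, ear_23; auto]. }
  pose proof He as He2. destruct He2 as (Hch & Hc & Hh & _).
  unfold VH in Hc, Hh. simpl in Hc, Hh. rewrite !in_app_iff in Hc, Hh.
  assert (Hu : forall k, In u (u :: nth k [[]; I1; I2; I3] [] ++ [v])) by (intros; simpl; auto).
  assert (Hv : forall k, In v (u :: nth k [[]; I1; I2; I3] [] ++ [v])) by (intros; simpl; rewrite in_app_iff; simpl; auto).
  assert (Hi : forall k x, In x (nth k [[]; I1; I2; I3] []) -> In x (u :: nth k [[]; I1; I2; I3] [] ++ [v]))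
    by (intros; simpl; rewrite in_app_iff; auto).
  destruct Hc as [<- | [<- | [Hc | [Hc | Hc]]]]; destruct Hh as [<- | [<- | [Hh | [Hh | Hh]]]];
    try congruence;
    first [ apply P1; simpl; rewrite ?in_app_iff; simpl; tauto
          | apply P2; simpl; rewrite ?in_app_iff; simpl; tauto
          | apply P3; simpl; rewrite ?in_app_iff; simpl; tauto
          | apply (Q 1 2); simpl; auto; congruence
          | apply (Q 1 3); simpl; auto; congruence
          | apply (Q 2 1); simpl; auto; congruence
          | apply (Q 2 3); simpl; auto; congruence
          | apply (Q 3 1); simpl; auto; congruence
          | apply (Q 3 2); simpl; auto; congruence ].
Qed.

End Ext2.

Section Cyc.
Variable G : graph.

Lemma cyc_rot a t c : NoDup (a :: t) -> walk G (a :: t ++ [a]) -> In c (a :: t) ->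
  exists t', NoDup (c :: t') /\ length t' = length t /\ walk G (c :: t' ++ [c]) /\
    (forall s, PE G (a :: t ++ [a]) s <-> PE G (c :: t' ++ [c]) s) /\
    (forall x, In x (a :: t) <-> In x (c :: t')).
Proof.
  intros Hnd Hw Hc. apply in_split in Hc. destruct Hc as (al & be & Hab).
  destruct al as [|a' al].
  - simpl in Hab. injection Hab as E1 E2. subst c t. exists be. split; auto. split; auto. split; auto. split; tauto.
  - simpl in Hab. injection Hab as E1 E2. subst a' t. exists (be ++ a :: al).
    assert (L1 : a :: (al ++ c :: be) ++ [a] = (a :: al) ++ c :: (be ++ [a])) by (simpl; rewrite <- app_assoc; reflexivity).
    assert (L2 : c :: (be ++ a :: al) ++ [c] = (c :: be) ++ a :: (al ++ [c])) by (simpl; rewrite <- app_assoc; reflexivity).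
    split; [|split; [|split; [|split]]].
    + clear - Hnd. nd_solve.
    + rewrite !length_app. simpl. lia.
    + rewrite L1, walk_app in Hw. rewrite L2, walk_app. tauto.
    + intro s. rewrite L1, L2, (PE_app G (a :: al) c (be ++ [a])), (PE_app G (c :: be) a (al ++ [c])). tauto.
    + intro x. simpl. rewrite !in_app_iff. simpl. tauto.
Qed.

Lemma cyc_ear a t c J h : NoDup (a :: t) -> 2 <= length t -> walk G (a :: t ++ [a]) ->
  ear G (a :: t) (PE G (a :: t ++ [a])) c J h ->
  exists g d, NoDup (c :: h :: g ++ d ++ J) /\ walk G (c :: g ++ [h]) /\ walk G (c :: d ++ [h]) /\
    walk G (c :: J ++ [h]) /\ g ++ d <> [] /\ g ++ J <> [] /\ d ++ J <> [] /\
    (forall s, PE G (a :: t ++ [a]) s <-> cE G c h g d s).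
Proof.
  intros Hnd Hlen Hw (Hch & Hc & Hh & HwQ & HndJ & HJV & HQE).
  destruct (cyc_rot a t c Hnd Hw Hc) as (t' & Hnd' & Hlen' & Hw' & HPE & HIn).
  assert (Hh' : In h t').
  { apply HIn in Hh. destruct Hh; [congruence|auto]. }
  apply in_split in Hh'. destruct Hh' as (g & d' & ->).
  assert (L : c :: (g ++ h :: d') ++ [c] = (c :: g) ++ h :: (d' ++ [c])) by (simpl; rewrite <- app_assoc; reflexivity).
  assert (R : h :: d' ++ [c] = rev (c :: rev d' ++ [h])) by (rewrite rev_path, rev_involutive; reflexivity).
  rewrite L, walk_app in Hw'. destruct Hw' as [Hw1 Hw2].
  assert (HE : forall s, PE G (a :: t ++ [a]) s <-> cE G c h g (rev d') s).
  { intro s. rewrite HPE, L, (PE_app G (c :: g) h (d' ++ [c])), R, PE_rev. unfold cE. tauto. }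
  assert (HQ1 : J = [] -> exists s, ends s c /\ ends s h /\ ~ PE G (a :: t ++ [a]) s).
  { intros ->. simpl in HwQ. destruct HwQ as [[_ (s & H1 & H2)] _]. exists s. split; auto. split; auto.
    apply HQE. simpl. auto. }
  exists g, (rev d'). split; [|split; [|split; [|split; [|split; [|split; [|split]]]]]].
  - assert (HJd : disj J (c :: g ++ h :: d')).
    { intros x H1 H2. apply (HJV x H1). apply HIn. auto. }
    clear - Hnd' HndJ HJd. nd_solve.
  - auto.
  - rewrite R in Hw2. replace (c :: rev d' ++ [h]) with (rev (rev (c :: rev d' ++ [h]))) by apply rev_involutive.
    apply walk_rev. auto.
  - auto.
  - intro H. apply app_eq_nil in H. destruct H as [-> H].
    destruct d'; simpl in H, Hlen'; [lia|]. apply app_eq_nil in H. destruct H as [_ H]. discriminate.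
  - intro H. apply app_eq_nil in H. destruct H as [-> ->].
    destruct (HQ1 eq_refl) as (s & H1 & H2 & H3). apply H3, HE. left. simpl. auto.
  - intro H. apply app_eq_nil in H. destruct H as [H ->].
    destruct (HQ1 eq_refl) as (s & H1 & H2 & H3). apply H3, HE. right. rewrite H. simpl. auto.
  - auto.
Qed.

End Cyc.

Section Final.
Variables G G' : graph.
Variable f : E G -> E G'.
Hypothesis hc : forall C, is_circuit G C -> is_circuit G' (image f C).
Hypothesis Hcon : forall x : V G, connected_minus G (fun y => y = x).

Lemma EH_in u v I1 I2 I3 : theta G u v I1 I2 I3 ->
  forall t, EH G u v I1 I2 I3 t -> forall x, ends t x -> In x (VH G u v I1 I2 I3).
Proof.
  intros (Hnd & Hw1 & Hw2 & Hw3 & _) t Ht x Hx. unfold VH.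
  destruct Ht as [H|[H|H]];
    [pose proof (PE_in G _ t x Hw1 H Hx) as Hi | pose proof (PE_in G _ t x Hw2 H Hx) as Hi
    | pose proof (PE_in G _ t x Hw3 H Hx) as Hi];
    simpl in *; rewrite !in_app_iff in *; simpl in *; tauto.
Qed.

Lemma good_EH Z u v I1 I2 I3 t : good G G' f Z u v I1 I2 I3 -> EH G u v I1 I2 I3 t -> Z (f t).
Proof.
  intros (_ & Z12 & Z13 & _) [H|[H|H]]; [apply Z12 | apply Z12 | apply Z13]; exists t; split; auto; unfold cE; auto.
Qed.

Lemma other_vertex u v I1 I2 I3 c : theta G u v I1 I2 I3 -> exists d, In d (VH G u v I1 I2 I3) /\ d <> c.
Proof.
  intros (Hnd & _). inversion Hnd as [|? ? Hu _]; subst.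
  assert (Huv : u <> v) by (intro; subst; apply Hu; simpl; auto).
  destruct (classic (u = c)) as [<- | Hc].
  - exists v. split; auto. unfold VH; simpl; auto.
  - exists u. split; auto. unfold VH; simpl; auto.
Qed.

Lemma other_end (z : E G) za : ends z za -> exists zb, zb <> za /\ ends z zb.
Proof.
  intros H. destruct (ends_two G z) as (p & q & Hpq & Hz). pose proof H as H'. apply Hz in H'.
  destruct H' as [-> | ->].
  - exists q. split; auto. apply Hz; auto.
  - exists p. split; auto. apply Hz; auto.
Qed.

Lemma part2 Z z za : ~ Z (f z) -> ends z za -> forall n u v I1 I2 I3 l b,
  good G G' f Z u v I1 I2 I3 -> walk G (b :: l) -> In b (VH G u v I1 I2 I3) ->
  last (b :: l) b = za -> length l < n -> False.
Proof.
  intros Hz Hza n. induction n as [|n IH]; intros u v I1 I2 I3 l b Hg Hw Hb Hl Hn; [lia|].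
  pose proof Hg as (Hth & _).
  destruct (classic (In za (VH G u v I1 I2 I3))) as [Hin | Hout].
  - destruct (classic (EH G u v I1 I2 I3 z)) as [HE | HE].
    { apply Hz. eapply good_EH; eauto. }
    destruct (other_vertex u v I1 I2 I3 za Hth) as (d & Hd & Hdz).
    destruct (other_end z za Hza) as (zb & Hzb & Hzb').
    destruct (ear_exists G _ _ za d zb z Hcon Hin Hd Hdz (EH_in u v I1 I2 I3 Hth) Hza Hzb' (not_eq_sym Hzb) HE)
      as (J & h & Hear & HPQ & _).
    destruct (ext G G' f hc Z u v I1 I2 I3 za J h Hg Hear) as (u' & v' & I1' & I2' & I3' & Hg' & HP & _).
    apply Hz. eapply good_EH; eauto.
  - rewrite <- Hl in Hout.
    destruct (last_exit G _ l b Hw Hb Hout) as (c & w & l2 & Hc & Hw' & Hcw & Hwl & Hlast & Hlen).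
    destruct (adj_edge G c w Hcw) as (s & Hsc & Hsw).
    assert (HEs : ~ EH G u v I1 I2 I3 s) by (intro H; apply Hw'; eapply EH_in; eauto).
    destruct (other_vertex u v I1 I2 I3 c Hth) as (d & Hd & Hdc).
    destruct Hcw as [Hcw' _].
    destruct (ear_exists G _ _ c d w s Hcon Hc Hd Hdc (EH_in u v I1 I2 I3 Hth) Hsc Hsw Hcw' HEs)
      as (J & h & Hear & _ & HwQ).
    destruct (ext G G' f hc Z u v I1 I2 I3 c J h Hg Hear) as (u' & v' & I1' & I2' & I3' & Hg' & _ & HI).
    apply (IH u' v' I1' I2' I3' l2 w Hg' Hwl (HI w HwQ)); [rewrite Hlast; auto | lia].
Qed.

Lemma pair_cyc u v I J : NoDup (u :: v :: I ++ J) -> walk G (u :: I ++ [v]) -> walk G (u :: J ++ [v]) ->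
  NoDup (u :: I ++ v :: rev J) /\ walk G (u :: (I ++ v :: rev J) ++ [u]) /\
  (forall s, PE G (u :: (I ++ v :: rev J) ++ [u]) s <-> cE G u v I J s).
Proof.
  intros Hnd HwI HwJ.
  assert (Hl : u :: (I ++ v :: rev J) ++ [u] = (u :: I) ++ v :: (rev J ++ [u])).
  { simpl. rewrite <- app_assoc. reflexivity. }
  assert (HvJ : v :: rev J ++ [u] = rev (u :: J ++ [v])) by (rewrite rev_path; auto).
  split; [|split].
  - clear - Hnd. nd_solve.
  - rewrite Hl, walk_app. split; auto. rewrite HvJ. apply walk_rev. auto.
  - intro s. rewrite Hl, (PE_app G (u :: I) v (rev J ++ [u])). unfold cE. rewrite HvJ, PE_rev. tauto.
Qed.

Lemma part1 x y ya : f x = f y -> ends y ya -> forall n a t l b,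
  NoDup (a :: t) -> 2 <= length t -> walk G (a :: t ++ [a]) ->
  PE G (a :: t ++ [a]) x -> ~ PE G (a :: t ++ [a]) y ->
  walk G (b :: l) -> In b (a :: t) -> last (b :: l) b = ya -> length l < n ->
  exists Z u v I1 I2 I3, good G G' f Z u v I1 I2 I3.
Proof.
  intros Hxy Hya n. induction n as [|n IH]; intros a t l b Hnd Hlen Hw Hx Hy Hwl Hb Hl Hn; [lia|].
  assert (HEin : forall s, PE G (a :: t ++ [a]) s -> forall w, ends s w -> In w (a :: t)).
  { intros s Hs w Hsw. pose proof (PE_in G _ s w Hw Hs Hsw) as H. simpl in H |- *.
    rewrite in_app_iff in H. simpl in H. tauto. }
  assert (Hother : forall c, exists d, In d (a :: t) /\ d <> c).
  { intros c. destruct t as [|a1 t]; [simpl in Hlen; lia|].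
    inversion Hnd as [|? ? Ha _]; subst.
    destruct (classic (a = c)) as [<- | Hc].
    - exists a1. split; [simpl; auto|]. intro; subst; apply Ha; simpl; auto.
    - exists a. split; [simpl; auto | auto]. }
  assert (Hstep : exists c w s, In c (a :: t) /\ ends s c /\ ends s w /\ c <> w /\ ~ PE G (a :: t ++ [a]) s /\
     (s = y \/ exists l2, walk G (w :: l2) /\ last (w :: l2) w = ya /\ length l2 < n)).
  { destruct (classic (In ya (a :: t))) as [Hin | Hout].
    - destruct (other_end y ya Hya) as (yb & Hyb & Hyb').
      exists ya, yb, y. split; [auto|]. split; [auto|]. split; [auto|]. split; [auto|].
      split; [exact Hy | left; reflexivity].
    - rewrite <- Hl in Hout.
      destruct (last_exit G _ l b Hwl Hb Hout) as (c & w & l2 & Hc & Hw' & Hcw & Hwl2 & Hlast & Hlen2).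
      destruct (adj_edge G c w Hcw) as (s & Hsc & Hsw).
      exists c, w, s. split; [auto|]. split; [auto|]. split; [auto|]. split; [destruct Hcw; auto|].
      split; [intro H; apply Hw'; eapply HEin; eauto|].
      right. exists l2. split; auto. split; [rewrite Hlast; auto | lia]. }
  destruct Hstep as (c & w & s & Hc & Hsc & Hsw & Hcw & HEs & Halt).
  destruct (Hother c) as (d & Hd & Hdc).
  destruct (ear_exists G (a :: t) _ c d w s Hcon Hc Hd Hdc HEin Hsc Hsw Hcw HEs) as (J & h & Hear & HPs & HwQ).
  destruct (cyc_ear G a t c J h Hnd Hlen Hw Hear) as (g & dd & Hnd3 & Hwg & Hwd & HwJ & N1 & N2 & N3 & HE).
  assert (Hth : theta G c h g dd J).
  { split; [auto|]. split; [auto|]. split; [auto|]. split; [auto|]. split; [auto|]. split; auto. }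
  destruct (theta_circ G c h g dd J Hth) as (C1 & C2 & C3).
  destruct (classic (PE G (c :: J ++ [h]) y)) as [HyQ | HyQ].
  - exists (image f (cE G c h g dd)), c, h, g, dd, J.
    assert (Ht : thU G (cE G c h g dd) (cE G c h g J) (cE G c h dd J))
      by (split; [|split]; intros s0; unfold cE; tauto).
    destruct (th_all G' _ _ _ (f y) (hc _ C1) (hc _ C2) (hc _ C3) (img_thU G G' f _ _ _ Ht)) as (E1 & E2).
    + exists x. split; auto. apply HE; auto.
    + exists y. split; auto. right; auto.
    + exists y. split; auto. right; auto.
    + split; auto. split; [intro; tauto|]. split; intro s0; [rewrite (E1 s0) | rewrite (E2 s0)]; tauto.
  - destruct Halt as [-> | (l2 & Hwl2 & Hl2 & Hlen2)]; [tauto|].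
    assert (Key : forall g', (g' = g \/ g' = dd) -> PE G (c :: g' ++ [h]) x -> ~ PE G (c :: g' ++ [h]) y ->
        exists Z u v I1 I2 I3, good G G' f Z u v I1 I2 I3).
    { intros g' Hg' Hxg Hyg.
      assert (Hnd4 : NoDup (c :: h :: g' ++ J)) by (destruct Hg' as [-> | ->]; clear - Hnd3; nd_solve).
      assert (Hwg' : walk G (c :: g' ++ [h])) by (destruct Hg' as [-> | ->]; auto).
      assert (Hne : g' ++ J <> []) by (destruct Hg' as [-> | ->]; auto).
      destruct (pair_cyc c h g' J Hnd4 Hwg' HwJ) as (Hnd5 & Hw5 & HP5).
      apply (IH c (g' ++ h :: rev J) l2 w Hnd5).
      - rewrite length_app. simpl. rewrite length_rev.
        destruct g'; destruct J; simpl in *; try congruence; lia.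
      - auto.
      - apply HP5. left. auto.
      - intro H. apply HP5 in H. destruct H as [H|H]; [auto|]. apply HyQ. auto.
      - auto.
      - simpl in HwQ |- *. rewrite in_app_iff in HwQ |- *. simpl in HwQ |- *. rewrite <- in_rev. tauto.
      - auto.
      - lia. }
    apply HE in Hx. destruct Hx as [Hx | Hx].
    + apply (Key g); auto. intro H. apply Hy, HE. left; auto.
    + apply (Key dd); auto. intro H. apply Hy, HE. right; auto.
Qed.

End Final.

Theorem lemma1p1 (G G' : graph) (f : E G -> E G')
  (hG : two_connected G) (hG' : ~ graph_is_circuit G')
  (hf : circuit_surjection G G' f)
  (e : E G') (C : E G -> Prop) (hC : is_circuit G C)
  (hmeet : exists x, C x /\ f x = e) :
  forall x, f x = e -> C x.
Proof.
  intros y Hy. apply NNPP. intro HyC.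
  destruct hf as (Hsurj & hc & _).
  destruct hG as (_ & Hc0 & Hcon).
  destruct hmeet as (x & Hx & Hfx).
  destruct (circuit_cyc G C hC) as (a & t & Hnd & Hlen & Hw & HC).
  destruct (ends_two G y) as (ya & yb & Hyab & Hy2).
  assert (Hya : ends y ya) by (apply Hy2; auto).
  destruct (ja_list G _ a ya (Hc0 a ya (fun H => H) (fun H => H))) as (l & Hwl & Hl & _).
  assert (Hxy : f x = f y) by congruence.
  destruct (part1 G G' f hc Hcon x y ya Hxy Hya (S (length l)) a t l a Hnd Hlen Hw) as (Z & u & v & I1 & I2 & I3 & Hg).
  { apply HC; auto. }
  { intro H. apply HyC, HC. auto. }
  { auto. }
  { simpl; auto. }
  { auto. }
  { lia. }
  pose proof Hg as (Hth & Z12 & _).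
  destruct (theta_circ G u v I1 I2 I3 Hth) as (C1 & _ & _).
  assert (HZc : is_circuit G' Z) by (apply (circ_ext G' (image f (cE G u v I1 I2))); auto).
  assert (Hg0 : exists g0, ~ Z g0).
  { apply NNPP. intro Hn. apply hG'. unfold graph_is_circuit. apply (circ_ext G' Z); auto.
    intro s. split; auto. intros _. apply NNPP. intro H. apply Hn. eauto. }
  destruct Hg0 as (g0 & Hg0). destruct (Hsurj g0) as (z & <-).
  destruct (ends_two G z) as (za & zb & Hzab & Hz2).
  assert (Hza : ends z za) by (apply Hz2; auto).
  destruct (ja_list G _ u za (Hc0 u za (fun H => H) (fun H => H))) as (l' & Hwl' & Hl' & _).
  apply (part2 G G' f hc Hcon Z z za Hg0 Hza (S (length l')) u v I1 I2 I3 l' u Hg Hwl'); auto.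
  unfold VH. simpl. auto.
Qed.
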